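(* Let $d\ge 10$. For $a\ge0$ let $u(a,\cdot)$ be the solution of $$y^{2}(1-y^{2})u''+\big((d-3)y-2y^{3}\big)u'+(d-2)u(1-u^{2})=0$$ with $u(a,y)=1-ay^{2}+O(y^{4})$ as $y\to0$, and let $c(a)=\lim_{y\to1^-}u(a,y)$. Then the function $a\mapsto c(a)$ is monotone decreasing on $[0,\infty)$, with $c(0)=1$ and $\lim_{a\to\infty}c(a)=0$.
   Context: For each $a\ge0$ there is a unique solution $u(a,y)$ of the equation, analytic in $(a,y)$ near $y=0$, with expansion $u(a,y)=1-ay^2+O(y^4)$ near $y=0$; it extends to a solution on $[0,1)$ and the limit $\lim_{y\to1^-}u(a,y)$ exists and is finite. *)

(* Defs.v *)
From Stdlib Require Import Reals Lra.
From Coquelicot Require Import Coquelicot.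
Open Scope R_scope.

Definition solves_ode (d : R) (v : R -> R) : Prop :=
  forall y, 0 < y < 1 ->
    ex_derive v y /\ ex_derive (Derive v) y /\
    y ^ 2 * (1 - y ^ 2) * Derive (Derive v) y
      + ((d - 3) * y - 2 * y ^ 3) * Derive v y
      + (d - 2) * v y * (1 - (v y) ^ 2) = 0.

Definition init_expansion (a : R) (v : R -> R) : Prop :=
  exists K delta, 0 < delta /\
    forall y, 0 <= y < delta -> Rabs (v y - (1 - a * y ^ 2)) <= K * y ^ 4.

(* Main.v *)
Require Import Defs.
From Stdlib Require Import Reals Lra Psatz.
From Coquelicot Require Import Coquelicot.
Open Scope R_scope.

Definition Nexp (d y f f1 f2 : R) :=
  y^2*(1-y^2)*f2 + ((d-3)*y - 2*y^3)*f1 + (d-2)*f*(1-f^2).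

Lemma no_max (h g : R -> R) (m a b g2 : R) :
  a < m < b -> (forall x, a < x < b -> is_derive h x (g x)) ->
  is_derive g m g2 -> (forall x, a < x < b -> h x <= h m) ->
  (g m = 0 -> 0 < g2) -> False.
Proof.
  intros Hm Hd Hg Hmax Hg2.
  assert (Hl : derivable_pt_lim h m (g m)) by (apply is_derive_Reals; apply Hd; lra).
  assert (g0 : g m = 0).
  { pose (pr := exist (fun l => derivable_pt_lim h m l) (g m) Hl : derivable_pt h m).
    change (derive_pt h m pr = 0).
    apply (deriv_maximum h a b m pr); try lra. intros; apply Hmax; lra. }
  specialize (Hg2 g0).
  apply is_derive_Reals in Hg.
  destruct (Hg (g2/2) ltac:(lra)) as [del Hdel].
  set (r := Rmin (del/2) ((b-m)/2)).
  assert (r0 : 0 < r) by (unfold r; apply Rmin_glb_lt; destruct del; simpl; lra).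
  assert (r1 : r <= del/2) by apply Rmin_l.
  assert (r2 : r <= (b-m)/2) by apply Rmin_r.
  destruct (MVT_cor2 h g m (m+r)) as [c [Hc1 Hc2]]; try lra.
  { intros c Hc. apply is_derive_Reals, Hd. lra. }
  assert (gc : 0 < g c).
  { specialize (Hdel (c - m) ltac:(lra)).
    assert (Rabs (c-m) < del) by (rewrite Rabs_pos_eq; destruct del; simpl in *; lra).
    specialize (Hdel H).
    replace (m + (c-m)) with c in Hdel by ring. rewrite g0 in Hdel.
    apply Rabs_def2 in Hdel. destruct Hdel as [_ Hlo].
    assert (0 < (g c - 0)/(c-m)) by lra.
    unfold Rdiv in H0. rewrite Rminus_0_r in H0.
    assert (0 < / (c - m)) by (apply Rinv_0_lt_compat; lra).
    nra. }
  specialize (Hmax (m+r) ltac:(lra)). nra.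
Qed.

Lemma cmp (d : R) (v w v1 w1 v2 w2 : R -> R) :
  10 <= d ->
  (forall y, 0 < y < 1 -> is_derive v y (v1 y) /\ is_derive v1 y (v2 y) /\
                         is_derive w y (w1 y) /\ is_derive w1 y (w2 y)) ->
  (forall y, 0 < y < 1 -> Nexp d y (w y) (w1 y) (w2 y) <= Nexp d y (v y) (v1 y) (v2 y)) ->
  (forall eta, 0 < eta -> exists e t, 0 < e < t /\ t < eta /\
       0 < t^2*(v t - w t) /\ e^2*(v e - w e) < t^2*(v t - w t)) ->
  forall y, 0 < y < 1 -> w y < v y.
Proof.
  intros Hd Hder HN H0 y1 Hy1.
  destruct (Rlt_or_le (w y1) (v y1)) as [|Hle]; auto. exfalso.
  set (h := fun y => y^2*(v y - w y)).
  set (g := fun y => 2*y*(v y - w y) + y^2*(v1 y - w1 y)).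
  assert (hd : forall x, 0 < x < 1 -> is_derive h x (g x)).
  { intros x Hx. destruct (Hder x Hx) as [A1 [A2 [A3 A4]]].
    unfold h, g. auto_derive.
    - split; [exists (v1 x); exact A1|split; [exists (w1 x); exact A3|exact I]].
    - assert (D1: Derive (fun x => v x) x = v1 x) by (apply is_derive_unique; exact A1).
      assert (D3: Derive (fun x => w x) x = w1 x) by (apply is_derive_unique; exact A3).
      rewrite D1, D3. ring. }
  destruct (H0 y1 ltac:(lra)) as [e [t [He [Ht [Hpos Hlt]]]]].
  destruct (continuity_ab_maj h e y1) as [m [Hmax Hm]]; try lra.
  { intros c Hc. 
    assert (Hl : derivable_pt_lim h c (g c)) by (apply is_derive_Reals; apply hd; lra).
    apply derivable_continuous_pt. exact (exist _ (g c) Hl). }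
  assert (hm1 : h t <= h m) by (apply Hmax; lra).
  assert (hy1 : h y1 <= 0) by (unfold h; assert (0 < y1^2) by (apply pow_lt; lra); nra).
  assert (m <> e) by (intro; subst; unfold h in *; lra).
  assert (m <> y1) by (intro; subst; unfold h in *; lra).
  assert (Hm' : e < m < y1) by lra.
  assert (Hm1 : 0 < m < 1) by lra.
  destruct (Hder m Hm1) as [A1 [A2 [A3 A4]]].
  pose (g2 := 2*(v m - w m) + 4*m*(v1 m - w1 m) + m^2*(v2 m - w2 m)).
  apply (no_max h g m e y1 g2 Hm').
  - intros; apply hd; lra.
  - unfold g. auto_derive.
    + repeat split; try (eexists; eassumption).
    + assert (D1: Derive (fun x => v x) m = v1 m) by (apply is_derive_unique; exact A1).
      assert (D3: Derive (fun x => w x) m = w1 m) by (apply is_derive_unique; exact A3).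
      assert (D2: Derive (fun x => v1 x) m = v2 m) by (apply is_derive_unique; exact A2).
      assert (D4: Derive (fun x => w1 x) m = w2 m) by (apply is_derive_unique; exact A4).
      rewrite D1, D2, D3, D4. unfold g2. ring.
  - intros; apply Hmax; lra.
  - intro G0. unfold g in G0.
    set (Z := v m - w m) in *. set (Z1 := v1 m - w1 m) in *. set (Z2 := v2 m - w2 m).
    assert (Zp : 0 < Z).
    { assert (Hh : 0 < h m) by (unfold h in *; lra). unfold h in Hh. fold Z in Hh.
      assert (0 < m^2) by (apply pow_lt; lra). nra. }
    assert (E1 : m*Z1 = -2*Z).
    { assert (Hq : m*(2*Z + m*Z1) = 0) by (rewrite <- G0; ring).
      apply Rmult_integral in Hq. destruct Hq; lra. }
    specialize (HN m Hm1). unfold Nexp in HN.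
    set (Q := v m ^2 + v m * w m + w m ^2).
    assert (Qp : 0 <= Q) by (unfold Q; nra).
    assert (Id : (1-m^2)*g2 - (m^2*(1-m^2)*(v2 m) + ((d-3)*m - 2*m^3)*(v1 m) + (d-2)*v m*(1-(v m)^2))
                  + (m^2*(1-m^2)*(w2 m) + ((d-3)*m - 2*m^3)*(w1 m) + (d-2)*w m*(1-(w m)^2))
                 = (1-m^2)*(2*Z + 4*(m*Z1)) - ((d-3) - 2*m^2)*(m*Z1) - (d-2)*Z*(1-Q)).
    { unfold g2, Z, Z1, Q. ring. }
    rewrite E1 in Id.
    assert (0 < (1-m^2)*g2).
    { assert (0 < Z*(d-10+2*m^2+(d-2)*Q)).
      { apply Rmult_lt_0_compat; auto. assert (0 < m^2) by (apply pow_lt; lra). nra. }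
      nra. }
    assert (0 < 1 - m^2) by nra. nra.
Qed.

Lemma Rabs_def2b (x b : R) : Rabs x <= b -> -b <= x <= b.
Proof. intros H. pose proof (Rle_abs x). pose proof (Rle_abs (-x)). rewrite Rabs_Ropp in H1. lra. Qed.

Lemma H0a (v w : R -> R) (al del K : R) :
  0 < al -> 0 < del ->
  (forall y, 0 < y < del -> Rabs (v y - w y - al*y^2) <= K*y^4) ->
  forall eta, 0 < eta -> exists e t, 0 < e < t /\ t < eta /\
       0 < t^2*(v t - w t) /\ e^2*(v e - w e) < t^2*(v t - w t).
Proof.
  intros Hal Hdel HK eta Heta.
  set (K' := Rabs K + 1).
  assert (K'p : 0 < K') by (unfold K'; pose proof (Rabs_pos K); lra).
  set (t := Rmin (Rmin eta del) (Rmin 1 (al/(4*K'))) / 2).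
  assert (Hq : 0 < al/(4*K')) by (apply Rdiv_lt_0_compat; lra).
  assert (t0 : 0 < t).
  { unfold t. repeat apply Rmin_glb_lt; try lra. 
    pose proof (Rmin_glb_lt (Rmin eta del) (Rmin 1 (al/(4*K'))) 0 ltac:(apply Rmin_glb_lt; lra) ltac:(apply Rmin_glb_lt; lra)). lra. }
  assert (t1 : t < eta /\ t < del /\ t < 1 /\ t <= al/(4*K')).
  { unfold t. pose proof (Rmin_l (Rmin eta del) (Rmin 1 (al/(4*K')))).
    pose proof (Rmin_r (Rmin eta del) (Rmin 1 (al/(4*K')))).
    pose proof (Rmin_l eta del). pose proof (Rmin_r eta del).
    pose proof (Rmin_l 1 (al/(4*K'))). pose proof (Rmin_r 1 (al/(4*K'))). lra. }
  assert (tK : K' * t <= al/4).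
  { destruct t1 as [_ [_ [_ Ht]]]. apply (Rmult_le_compat_l K') in Ht; try lra.
    replace (K' * (al/(4*K'))) with (al/4) in Ht by (field; lra). lra. }
  assert (KK : K <= K') by (unfold K'; pose proof (Rle_abs K); lra).
  exists (t/2), t. split; [lra|]. split; [lra|].
  pose proof (HK t ltac:(lra)) as B1. pose proof (HK (t/2) ltac:(lra)) as B2.
  apply Rabs_def2b in B1. apply Rabs_def2b in B2.
  set (z1 := v t - w t) in *. set (z2 := v (t/2) - w (t/2)) in *.
  assert (t2 : 0 < t^2) by (apply pow_lt; lra).
  assert (Kt2 : K * t^2 <= al/4).
  { assert (K*t^2 <= K'*t^2) by (apply Rmult_le_compat_r; lra).
    assert (K'*t^2 <= K'*t) by (assert (t^2 <= t) by (simpl; nra); nra). lra. }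
  assert (z1b : 3/4*al*t^2 <= z1).
  { assert (K*t^4 = (K*t^2)*t^2) by ring. nra. }
  assert (z2b : z2 <= 5/4*al*(t/2)^2).
  { assert (K*(t/2)^4 = (K*t^2)*(t/2)^2/4) by (field). 
    assert (0 < (t/2)^2) by (apply pow_lt; lra). nra. }
  assert (alt : 0 < al*t^2) by (apply Rmult_lt_0_compat; lra).
  split.
  - apply Rmult_lt_0_compat; lra.
  - assert ((t/2)^2 = t^2/4) by field.
    assert ((t/2)^2 * z2 <= t^2/4 * (5/4*al*(t^2/4))) by (rewrite H; apply Rmult_le_compat_l; nra).
    assert (t^2 * (3/4*al*t^2) <= t^2 * z1) by (apply Rmult_le_compat_l; lra).
    assert (0 < al * t^2 * t^2) by (apply Rmult_lt_0_compat; nra).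
    nra.
Qed.

Lemma H0b (v w : R -> R) (del : R) :
  0 < del ->
  (forall y, 0 < y < del -> 1/2 <= v y - w y <= 2) ->
  forall eta, 0 < eta -> exists e t, 0 < e < t /\ t < eta /\
       0 < t^2*(v t - w t) /\ e^2*(v e - w e) < t^2*(v t - w t).
Proof.
  intros Hdel HK eta Heta.
  set (t := Rmin eta del / 2).
  assert (t0 : 0 < t /\ t < eta /\ t < del).
  { unfold t. pose proof (Rmin_l eta del). pose proof (Rmin_r eta del).
    pose proof (Rmin_glb_lt eta del 0 Heta Hdel). lra. }
  exists (t/3), t. split; [lra|]. split; [lra|].
  pose proof (HK t ltac:(lra)) as B1. pose proof (HK (t/3) ltac:(lra)) as B2.
  assert (t2 : 0 < t^2) by (apply pow_lt; lra).
  split; [nra|].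
  assert ((t/3)^2 = t^2/9) by field.
  rewrite H. nra.
Qed.

Lemma at_left_pt (P : R -> Prop) : at_left 1 P -> exists y, 1/2 < y < 1 /\ P y.
Proof.
  intros [del Hdel].
  set (r := Rmin (del/2) (1/4)).
  assert (0 < r) by (unfold r; apply Rmin_glb_lt; destruct del; simpl; lra).
  assert (r <= del/2) by apply Rmin_l. assert (r <= 1/4) by apply Rmin_r.
  exists (1 - r). split; [lra|]. apply Hdel; [|lra].
  unfold ball; simpl; unfold AbsRing_ball, abs, minus, plus, opp; simpl.
  rewrite Rabs_left; destruct del; simpl in *; lra.
Qed.

Lemma lim_le2 (f g : R -> R) (L1 L2 : R) :
  filterlim f (at_left 1) (locally L1) -> filterlim g (at_left 1) (locally L2) ->
  (forall y, 1/2 < y < 1 -> f y <= g y) -> L1 <= L2.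
Proof.
  intros Hf Hg Hfg.
  destruct (Rle_or_lt L1 L2) as [|Hlt]; auto. exfalso.
  assert (ep : 0 < (L1 - L2)/2) by lra.
  pose proof (proj1 (filterlim_locally f L1) Hf (mkposreal _ ep)) as F1.
  pose proof (proj1 (filterlim_locally g L2) Hg (mkposreal _ ep)) as F2.
  destruct (at_left_pt _ (filter_and _ _ F1 F2)) as [y [Hy [B1 B2]]].
  revert B1 B2; unfold ball; simpl; unfold AbsRing_ball, abs, minus, plus, opp; simpl.
  intros B1 B2. apply Rabs_def2 in B1. apply Rabs_def2 in B2.
  specialize (Hfg y Hy). lra.
Qed.

Lemma lim_le (f : R -> R) (L M : R) :
  filterlim f (at_left 1) (locally L) -> (forall y, 1/2 < y < 1 -> f y <= M) -> L <= M.
Proof. intros. apply (lim_le2 f (fun _ => M)); auto. apply filterlim_const. Qed.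

Lemma lim_ge (f : R -> R) (L M : R) :
  filterlim f (at_left 1) (locally L) -> (forall y, 1/2 < y < 1 -> M <= f y) -> M <= L.
Proof. intros. apply (lim_le2 (fun _ => M) f); auto. apply filterlim_const. Qed.

Definition Tb (s b y : R) := 1 + s*(b*y^2 + 2*b*y^4).
Definition Tb1 (s b y : R) := s*(2*b*y + 8*b*y^3).
Definition Tb2 (s b y : R) := s*(2*b + 24*b*y^2).

Lemma Tb_der s b y : is_derive (Tb s b) y (Tb1 s b y) /\ is_derive (Tb1 s b) y (Tb2 s b y).
Proof.
  split; unfold Tb, Tb1, Tb2; auto_derive; auto; ring.
Qed.

Lemma Tb_N d s b y : (s = 1 \/ s = -1) ->
  Nexp d y (Tb s b y) (Tb1 s b y) (Tb2 s b y) =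
  y^4 * (s*b*(4*d+2-40*y^2) - (d-2)*(3*(b*(1+2*y^2))^2 + s*y^2*(b*(1+2*y^2))^3)).
Proof.
  intros [-> | ->]; unfold Nexp, Tb, Tb1, Tb2; ring.
Qed.

Lemma T_neg d b y : 10 <= d -> 0 < b <= 1 -> 0 < y < 1 ->
  Nexp d y (Tb (-1) b y) (Tb1 (-1) b y) (Tb2 (-1) b y) <= 0.
Proof.
  intros Hd Hb Hy. rewrite Tb_N by auto.
  set (W := b*(1+2*y^2)).
  assert (W0 : 0 <= W <= 3) by (unfold W; nra).
  assert (y4 : 0 < y^4) by (apply pow_lt; lra).
  assert (y2 : 0 < y^2 < 1) by (simpl; nra).
  assert (A : (-1)*b*(4*d+2-40*y^2) <= 0).
  { assert (0 <= 4*d+2-40*y^2) by lra. nra. }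
  assert (B : 0 <= 3*W^2 + (-1)*y^2*W^3).
  { assert (y^2*W <= 3) by nra.
    assert (HH : 3*W^2 + (-1)*y^2*W^3 = W^2*(3 - y^2*W)) by ring. rewrite HH.
    apply Rmult_le_pos; [nra|lra]. }
  assert (0 <= (d-2)*(3*W^2 + (-1)*y^2*W^3)) by (apply Rmult_le_pos; lra).
  nra.
Qed.

Lemma S_pos d b y : 10 <= d -> 0 < b <= 1/200 -> 0 < y < 1 ->
  0 <= Nexp d y (Tb 1 b y) (Tb1 1 b y) (Tb2 1 b y).
Proof.
  intros Hd Hb Hy. rewrite Tb_N by auto.
  set (W := b*(1+2*y^2)).
  assert (y2 : 0 < y^2 < 1) by (simpl; nra).
  assert (W0 : 0 <= W <= 3*b) by (unfold W; nra).
  assert (y4 : 0 < y^4) by (apply pow_lt; lra).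
  assert (A : b*(4*d-38) <= 1*b*(4*d+2-40*y^2)) by nra.
  assert (B : 3*W^2 + 1*y^2*W^3 <= b*(27*b + 27*b^2)).
  { assert (W^2 <= 9*b^2) by nra.
    assert (W^3 <= 27*b^3) by (simpl; nra).
    assert (y^2 * W^3 <= W^3) by (assert (0 <= W^3) by (simpl; nra); nra).
    nra. }
  assert (C : (d-2)*(3*W^2 + 1*y^2*W^3) <= (d-2)*(b*(27*b+27*b^2))) by (apply Rmult_le_compat_l; lra).
  assert (E : (d-2)*(b*(27*b+27*b^2)) <= b*(4*d-38)).
  { assert (27*b+27*b^2 <= 1/5) by nra.
    assert ((d-2)*(27*b+27*b^2) <= (d-2)/5) by (apply Rmult_le_compat_l; lra).
    assert (HH : (d-2)*(b*(27*b+27*b^2)) = b*((d-2)*(27*b+27*b^2))) by ring.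
    rewrite HH. apply Rmult_le_compat_l; lra. }
  apply Rmult_le_pos; lra.
Qed.

Definition SB (be y : R) := / sqrt (1 + be*y^2).
Definition SB1 (be y : R) := - be*y / (sqrt (1 + be*y^2))^3.
Definition SB2 (be y : R) := - be / (sqrt (1 + be*y^2))^3 + 3*be^2*y^2/(sqrt (1 + be*y^2))^5.

Lemma SB_der be y : 0 <= be -> is_derive (SB be) y (SB1 be y) /\ is_derive (SB1 be) y (SB2 be y).
Proof.
  intros Hbe.
  assert (P : 0 < 1 + be*y^2) by (assert (0 <= y^2) by (simpl; nra); nra).
  assert (Q : 0 < sqrt (1 + be*y^2)) by (apply sqrt_lt_R0; lra).
  assert (Q2 : sqrt (1 + be*y^2) * sqrt (1 + be*y^2) = 1 + be*y^2) by (apply sqrt_sqrt; lra).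
  split; unfold SB, SB1, SB2.
  - auto_derive.
    + split; [lra|split; [|exact I]]. replace (y*(y*1)) with (y^2) by ring. lra.
    + replace (y*(y*1)) with (y^2) by ring. field. lra.
  - auto_derive.
    + split; [lra|split; [|exact I]]. replace (y*(y*1)) with (y^2) by ring.
      apply Rgt_not_eq. assert (0 < sqrt (1 + be*y^2) * sqrt (1 + be*y^2)) by nra. nra.
    + replace (y*(y*1)) with (y^2) by ring. field. lra.
Qed.

Lemma SB_N d be y : 0 <= be -> 0 < y ->
  0 <= Nexp d y (SB be y) (SB1 be y) (SB2 be y).
Proof.
  intros Hbe Hy.
  assert (P : 0 < 1 + be*y^2) by (assert (0 <= y^2) by (simpl; nra); nra).
  assert (Q : 0 < sqrt (1 + be*y^2)) by (apply sqrt_lt_R0; lra).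
  assert (Q2 : sqrt (1 + be*y^2) ^ 2 = 1 + be*y^2) by (rewrite pow2_sqrt; lra).
  unfold Nexp, SB, SB1, SB2. set (s := sqrt (1 + be*y^2)) in *.
  assert (E : y ^ 2 * (1 - y ^ 2) * (- be / s ^ 3 + 3 * be ^ 2 * y ^ 2 / s ^ 5) +
     ((d - 3) * y - 2 * y ^ 3) * (- be * y / s ^ 3) + (d - 2) * / s * (1 - (/ s) ^ 2)
     = (y^2*(1-y^2)*(-be*s^2 + 3*be^2*y^2) - be*y^2*((d-3) - 2*y^2)*s^2 + (d-2)*(s^2*s^2 - s^2)) / s^5).
  { field. lra. }
  rewrite E, Q2.
  replace (y^2*(1-y^2)*(-be*(1+be*y^2) + 3*be^2*y^2) - be*y^2*((d-3) - 2*y^2)*(1+be*y^2) + (d-2)*((1+be*y^2)*(1+be*y^2) - (1+be*y^2)))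
    with (3*be*y^2*(be*y^2 + y^2)) by ring.
  apply Rmult_le_pos.
  - assert (0 <= y^2) by (simpl; nra). assert (0 <= be*y^2) by nra. nra.
  - apply Rlt_le, Rinv_0_lt_compat, pow_lt; lra.
Qed.

Lemma SB_exp be y : 0 <= be ->
  Rabs (SB be y - 1 + be/2*y^2) <= be^2 * y^4.
Proof.
  intros Hbe.
  assert (Y : 0 <= y^2) by (simpl; nra).
  assert (P : 0 < 1 + be*y^2) by nra.
  assert (Q : 1 <= sqrt (1 + be*y^2)).
  { assert (HH : sqrt 1 <= sqrt (1 + be*y^2)) by (apply sqrt_le_1_alt; nra).
    rewrite sqrt_1 in HH. exact HH. }
  assert (Q2 : sqrt (1 + be*y^2) * sqrt (1 + be*y^2) = 1 + be*y^2) by (apply sqrt_sqrt; lra).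
  unfold SB. set (s := sqrt (1 + be*y^2)) in *.
  assert (X : be*y^2 = s*s - 1) by lra.
  replace (be/2*y^2) with ((s*s-1)/2) by lra.
  replace (be^2*y^4) with ((be*y^2)^2) by ring. rewrite X.
  replace (/ s - 1 + (s*s-1)/2) with ((s-1)^2*(s+2)/(2*s)) by (field; lra).
  rewrite Rabs_pos_eq.
  - apply (Rmult_le_reg_r (2*s)); [lra|].
    replace ((s-1)^2*(s+2)/(2*s)*(2*s)) with ((s-1)^2*(s+2)) by (field; lra).
    assert (0 <= (s-1)^2) by (simpl; nra).
    replace ((s*s-1)^2*(2*s)) with ((s-1)^2*((s+1)^2*(2*s))) by ring.
    apply Rmult_le_compat_l; auto. simpl. nra.
  - apply Rmult_le_pos; [apply Rmult_le_pos; [simpl; nra|lra]|].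
    apply Rlt_le, Rinv_0_lt_compat; lra.
Qed.

Lemma sol_der D v : solves_ode D v -> forall y, 0 < y < 1 ->
  is_derive v y (Derive v y) /\ is_derive (Derive v) y (Derive (Derive v) y) /\
  Nexp D y (v y) (Derive v y) (Derive (Derive v) y) = 0.
Proof.
  intros H y Hy. destruct (H y Hy) as [A1 [A2 A3]].
  split; [apply Derive_correct; auto|split; [apply Derive_correct; auto|]].
  unfold Nexp. rewrite <- A3. ring.
Qed.

Lemma exp_bound a v : init_expansion a v ->
  exists K del, 0 <= K /\ 0 < del /\ forall y, 0 < y < del -> Rabs (v y - 1 + a*y^2) <= K*y^4.
Proof.
  intros [K [del [Hd H]]]. exists (Rabs K), del. split; [apply Rabs_pos|split; auto].
  intros y Hy. replace (v y - 1 + a*y^2) with (v y - (1 - a*y^2)) by ring.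
  eapply Rle_trans; [apply H; lra|]. apply Rmult_le_compat_r; [|apply Rle_abs].
  apply pow_le; lra.
Qed.

Lemma d0 y : is_derive (fun _ : R => 0) y 0.
Proof. auto_derive; auto. Qed.

Theorem lemma2 (d : nat) (u : R -> R -> R) (c : R -> R) :
  (10 <= d)%nat ->
  (forall a, 0 <= a -> solves_ode (INR d) (u a)) ->
  (forall a, 0 <= a -> init_expansion a (u a)) ->
  (forall a, 0 <= a -> filterlim (u a) (at_left 1) (locally (c a))) ->
  (forall a b, 0 <= a -> a <= b -> c b <= c a) /\
  c 0 = 1 /\
  is_lim c p_infty 0.
Proof.
  intros Hd Hsol Hexp Hlim.
  assert (D10 : 10 <= INR d).
  { apply le_INR in Hd. replace (INR 10) with 10 in Hd by (simpl; ring). exact Hd. }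
  set (D := INR d) in *.
  assert (F1 : forall a, 0 <= a -> forall y, 0 < y < 1 -> 0 < u a y).
  { intros a Ha.
    destruct (exp_bound a (u a) (Hexp a Ha)) as [K [del [K0 [Hdel HK]]]].
    apply (cmp D (u a) (fun _ => 0) (Derive (u a)) (fun _ => 0) (Derive (Derive (u a))) (fun _ => 0) D10).
    - intros y Hy. destruct (sol_der D (u a) (Hsol a Ha) y Hy) as [A1 [A2 _]].
      split; [exact A1|split; [exact A2|split; apply d0]].
    - intros y Hy. destruct (sol_der D (u a) (Hsol a Ha) y Hy) as [_ [_ A3]].
      rewrite A3. unfold Nexp. lra.
    - set (r := Rmin (Rmin del 1) (1/(4*(a+K+1)))).
      assert (r0 : 0 < r).
      { unfold r. apply Rmin_glb_lt; [apply Rmin_glb_lt; lra|].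
        apply Rdiv_lt_0_compat; lra. }
      apply (H0b (u a) (fun _ => 0) r r0).
      intros y Hy.
      assert (Hy1 : y < del /\ y < 1 /\ y <= 1/(4*(a+K+1))).
      { unfold r in Hy. pose proof (Rmin_l (Rmin del 1) (1/(4*(a+K+1)))).
        pose proof (Rmin_r (Rmin del 1) (1/(4*(a+K+1)))).
        pose proof (Rmin_l del 1). pose proof (Rmin_r del 1). lra. }
      specialize (HK y ltac:(lra)). apply Rabs_def2b in HK.
      assert (y2 : y^2 <= y) by (simpl; nra).
      assert (y4 : y^4 <= y) by (assert (y^4 = y^2*y^2) by ring; nra).
      assert (ay : (a+K+1)*y <= 1/4).
      { destruct Hy1 as [_ [_ Hy1]]. apply (Rmult_le_compat_l (a+K+1)) in Hy1; [|lra].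
        replace ((a+K+1)*(1/(4*(a+K+1)))) with (1/4) in Hy1 by (field; lra). lra. }
      assert (a*y^2 <= a*y) by nra. assert (K*y^4 <= K*y) by nra.
      assert (0 <= a*y^2) by (apply Rmult_le_pos; [lra|simpl; nra]).
      lra. }
  assert (F2 : forall a b, 0 <= a -> a < b -> forall y, 0 < y < 1 -> u b y < u a y).
  { intros a b Ha Hab.
    assert (Hb : 0 <= b) by lra.
    destruct (exp_bound a (u a) (Hexp a Ha)) as [Ka [dla [Ka0 [Hdla HKa]]]].
    destruct (exp_bound b (u b) (Hexp b Hb)) as [Kb [dlb [Kb0 [Hdlb HKb]]]].
    apply (cmp D (u a) (u b) (Derive (u a)) (Derive (u b)) (Derive (Derive (u a))) (Derive (Derive (u b))) D10).
    - intros y Hy. destruct (sol_der D (u a) (Hsol a Ha) y Hy) as [A1 [A2 _]].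
      destruct (sol_der D (u b) (Hsol b Hb) y Hy) as [B1 [B2 _]]. auto.
    - intros y Hy. destruct (sol_der D (u a) (Hsol a Ha) y Hy) as [_ [_ A3]].
      destruct (sol_der D (u b) (Hsol b Hb) y Hy) as [_ [_ B3]]. lra.
    - apply (H0a (u a) (u b) (b-a) (Rmin dla dlb) (Ka+Kb)); [lra|apply Rmin_glb_lt; lra|].
      intros y Hy. pose proof (Rmin_l dla dlb). pose proof (Rmin_r dla dlb).
      specialize (HKa y ltac:(lra)). specialize (HKb y ltac:(lra)).
      replace (u a y - u b y - (b-a)*y^2) with ((u a y - 1 + a*y^2) + - (u b y - 1 + b*y^2)) by ring.
      eapply Rle_trans; [apply Rabs_triang|]. rewrite Rabs_Ropp. lra. }
  assert (H00 : 0 <= 0) by lra.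
  destruct (exp_bound 0 (u 0) (Hexp 0 H00)) as [K0 [dl0 [K00 [Hdl0 HK0]]]].
  assert (F3 : forall b, 0 < b <= 1 -> forall y, 0 < y < 1 -> Tb (-1) b y < u 0 y).
  { intros b Hb.
    apply (cmp D (u 0) (Tb (-1) b) (Derive (u 0)) (Tb1 (-1) b) (Derive (Derive (u 0))) (Tb2 (-1) b) D10).
    - intros y Hy. destruct (sol_der D (u 0) (Hsol 0 H00) y Hy) as [A1 [A2 _]].
      destruct (Tb_der (-1) b y). auto.
    - intros y Hy. destruct (sol_der D (u 0) (Hsol 0 H00) y Hy) as [_ [_ A3]].
      rewrite A3. apply T_neg; auto.
    - apply (H0a (u 0) (Tb (-1) b) b dl0 (K0 + 2*b)); [lra|lra|].
      intros y Hy. specialize (HK0 y Hy).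
      replace (u 0 y - Tb (-1) b y - b*y^2) with ((u 0 y - 1 + 0*y^2) + 2*b*y^4) by (unfold Tb; ring).
      eapply Rle_trans; [apply Rabs_triang|]. rewrite (Rabs_pos_eq (2*b*y^4)).
      + lra.
      + apply Rmult_le_pos; [lra|apply pow_le; lra]. }
  assert (F4 : forall b, 0 < b <= 1/200 -> forall y, 0 < y < 1 -> u 0 y < Tb 1 b y).
  { intros b Hb.
    apply (cmp D (Tb 1 b) (u 0) (Tb1 1 b) (Derive (u 0)) (Tb2 1 b) (Derive (Derive (u 0))) D10).
    - intros y Hy. destruct (sol_der D (u 0) (Hsol 0 H00) y Hy) as [A1 [A2 _]].
      destruct (Tb_der 1 b y). auto.
    - intros y Hy. destruct (sol_der D (u 0) (Hsol 0 H00) y Hy) as [_ [_ A3]].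
      rewrite A3. apply S_pos; auto.
    - apply (H0a (Tb 1 b) (u 0) b dl0 (K0 + 2*b)); [lra|lra|].
      intros y Hy. specialize (HK0 y Hy).
      replace (Tb 1 b y - u 0 y - b*y^2) with (- (u 0 y - 1 + 0*y^2) + 2*b*y^4) by (unfold Tb; ring).
      eapply Rle_trans; [apply Rabs_triang|]. rewrite Rabs_Ropp, (Rabs_pos_eq (2*b*y^4)).
      + lra.
      + apply Rmult_le_pos; [lra|apply pow_le; lra]. }
  assert (F5 : forall a, 0 < a -> forall y, 0 < y < 1 -> u a y < SB a y).
  { intros a Ha. assert (Ha' : 0 <= a) by lra.
    destruct (exp_bound a (u a) (Hexp a Ha')) as [Ka [dla [Ka0 [Hdla HKa]]]].
    apply (cmp D (SB a) (u a) (SB1 a) (Derive (u a)) (SB2 a) (Derive (Derive (u a))) D10).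
    - intros y Hy. destruct (sol_der D (u a) (Hsol a Ha') y Hy) as [A1 [A2 _]].
      destruct (SB_der a y Ha'). auto.
    - intros y Hy. destruct (sol_der D (u a) (Hsol a Ha') y Hy) as [_ [_ A3]].
      rewrite A3. apply SB_N; lra.
    - apply (H0a (SB a) (u a) (a/2) dla (a^2 + Ka)); [lra|lra|].
      intros y Hy. specialize (HKa y Hy). pose proof (SB_exp a y Ha').
      replace (SB a y - u a y - a/2*y^2) with ((SB a y - 1 + a/2*y^2) + - (u a y - 1 + a*y^2)) by field.
      eapply Rle_trans; [apply Rabs_triang|]. rewrite Rabs_Ropp. lra. }
  split; [|split].
  - intros a b Ha Hab. destruct (Req_dec a b) as [<-|Hne]; [lra|].
    apply (lim_le2 (u b) (u a)); try (apply Hlim; lra).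
    intros y Hy. apply Rlt_le, F2; lra.
  - assert (L : forall b, 0 < b <= 1/200 -> 1 - 3*b <= c 0 <= 1 + 3*b).
    { intros b Hb. split.
      - apply (lim_ge (u 0)); [apply Hlim; lra|].
        intros y Hy. pose proof (F3 b ltac:(lra) y ltac:(lra)). unfold Tb in H.
        assert (y^2 <= 1) by (simpl; nra). assert (y^4 <= 1) by (assert (y^4 = y^2*y^2) by ring; nra). nra.
      - apply (lim_le (u 0)); [apply Hlim; lra|].
        intros y Hy. pose proof (F4 b ltac:(lra) y ltac:(lra)). unfold Tb in H.
        assert (y^2 <= 1) by (simpl; nra). assert (y^4 <= 1) by (assert (y^4 = y^2*y^2) by ring; nra). nra. }
    destruct (Rtotal_order (c 0) 1) as [Hl|[He|Hg]]; auto; exfalso.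
    + set (b := Rmin (1/200) ((1 - c 0)/6)).
      assert (0 < b) by (unfold b; apply Rmin_glb_lt; lra).
      assert (b <= 1/200) by apply Rmin_l. assert (b <= (1 - c 0)/6) by apply Rmin_r.
      specialize (L b ltac:(lra)). lra.
    + set (b := Rmin (1/200) ((c 0 - 1)/6)).
      assert (0 < b) by (unfold b; apply Rmin_glb_lt; lra).
      assert (b <= 1/200) by apply Rmin_l. assert (b <= (c 0 - 1)/6) by apply Rmin_r.
      specialize (L b ltac:(lra)). lra.
  - apply is_lim_spec. intros eps. simpl.
    assert (ep := cond_pos eps).
    exists (4/(eps*eps)). intros a Ha.
    assert (a0 : 0 < a).
    { assert (0 < 4/(eps*eps)) by (apply Rdiv_lt_0_compat; nra). lra. }
    assert (cpos : 0 <= c a).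
    { apply (lim_ge (u a)); [apply Hlim; lra|]. intros y Hy. apply Rlt_le, F1; lra. }
    set (M := / sqrt (1 + a/4)).
    assert (Sq : 0 < sqrt (1 + a/4)) by (apply sqrt_lt_R0; lra).
    assert (cle : c a <= M).
    { apply (lim_le (u a)); [apply Hlim; lra|]. intros y Hy.
      apply Rlt_le. eapply Rlt_le_trans; [apply F5; lra|]. unfold SB, M.
      apply Rinv_le_contravar; [lra|]. apply sqrt_le_1_alt.
      assert (1/4 <= y^2) by (simpl; nra). nra. }
    assert (Mlt : M < eps).
    { assert (M2 : M*M = / (1 + a/4)).
      { unfold M. rewrite <- Rinv_mult, sqrt_sqrt; lra. }
      assert (M0 : 0 < M) by (unfold M; apply Rinv_0_lt_compat; lra).
      assert (4/(eps*eps) * (eps*eps) = 4) by (field; lra).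
      assert (1 < (1 + a/4) * (eps*eps)) by nra.
      assert (HX : M*M*((1 + a/4)*(eps*eps)) = eps*eps) by (rewrite M2; field; lra).
      assert (HMM : M*M < eps*eps).
      { assert (0 < (M*M) * ((1 + a/4)*(eps*eps) - 1)) by (apply Rmult_lt_0_compat; nra). nra. }
      destruct (Rlt_or_le M eps); auto.
      assert (eps*eps <= M*M) by (apply Rmult_le_compat; lra). lra. }
    rewrite Rminus_0_r, Rabs_pos_eq by lra. lra.
Qed.
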